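(* Let $\mathbf G_n=\mathbf G_n(d,\Omega,k,\Psi,\rho)$ be the Poisson random factor graph and assume $$\lim_{n\to\infty}\frac1{n^2}\sum_{i,j=1}^n\mathbb E\left\|\mu_{\mathbf G_n,x_i,x_j}-\mu_{\mathbf G_n,x_i}\otimes\mu_{\mathbf G_n,x_j}\right\|_{TV}=0 .$$ Then $$\frac1n\mathbb E\sum_{a\in F(\mathbf G_n)}\sum_{\sigma\in\Omega^{\partial a}}\left|\mu_{\mathbf G_n,a}(\sigma)-\frac{\psi_a(\sigma)\prod_{x\in\partial a}\mu_{\mathbf G_n,x\to a}(\sigma(x))}{\sum_{\tau\in\Omega^{\partial a}}\psi_a(\tau)\prod_{x\in\partial a}\mu_{\mathbf G_n,x\to a}(\tau(x))}\right|=o(1)\quad\text{as }n\to\infty.$$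
   Context: Factor graphs: Fix a finite set $\Omega$ of spins. A factor graph $G$ consists of variable nodes $V(G)$, constraint nodes $F(G)$, for each $a\in F(G)$ an ordered tuple $\partial a=(y_1,\ldots,y_{d(a)})$ of variable nodes and a weight function $\psi_a:\Omega^{d(a)}\to(0,\infty)$; for $\sigma\in\Omega^{\partial a}$, $\psi_a(\sigma)=\psi_a(\sigma(y_1),\ldots,\sigma(y_{d(a)}))$. Gibbs measure $\mu_G(\sigma)=Z_G^{-1}\prod_a\psi_a(\sigma(\partial a))$ on $\Omega^{V(G)}$; $\mu_{G,x}$, $\mu_{G,x,y}$ one- and two-point marginals; $\mu_{G,a}$ the joint distribution of the spins of the variables in $\partial a$. For $x\in\partial a$, $\mu_{G,x\to a}$ is the marginal of $x$ in the Gibbs measure of $G-a$ (constraint node $a$ deleted). Poisson random factor graph $\mathbf G_n(d,\Omega,k,\Psi,\rho)$: $d>0$, $k\geq3$, $\Psi$ a finite nonempty set of functions $\Omega^k\to(0,\infty)$, $\rho$ a distribution on $\Psi$, fixed as $n\to\infty$; variable nodes $x_1,\ldots,x_n$, $m\sim\mathrm{Po}(dn/k)$ constraint nodes, each independently with $\psi_{a_i}\sim\rho$ and $\partial a_i$ uniform in $\{x_1,\ldots,x_n\}^k$. *)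

(* Defs.v *)
From Stdlib Require Import Reals.
From mathcomp Require Import all_boot.
Set Implicit Arguments. Unset Strict Implicit. Unset Printing Implicit Defensive.
Open Scope R_scope.

Notation cfg Om n := {ffun 'I_n -> Om} (only parsing).

(* A factor graph with n variables and m constraint nodes: constraint i has
   a weight-function label (an element of the index type I of Psi) and an
   ordered k-tuple of variable nodes (its neighbourhood, repetitions allowed). *)
Notation fgraph I k n m :=
  {ffun 'I_m -> (I * {ffun 'I_k -> 'I_n})%type} (only parsing).

Definition loc (Om : finType) (k n : nat) (s : {ffun 'I_n -> Om})
  (v : {ffun 'I_k -> 'I_n}) : {ffun 'I_k -> Om} := [ffun j => s (v j)].

Section Gibbs.
Variables (Om I : finType) (k n m : nat) (psi : I -> {ffun 'I_k -> Om} -> R).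
Variable (G : fgraph I k n m).

(* unnormalised weight using only the constraints i with S i (S = predT: G;
   S = predC1 a : G - a) *)
Definition gweight (S : pred 'I_m) (s : {ffun 'I_n -> Om}) : R :=
  \big[Rmult/1]_(i < m | S i) psi (G i).1 (loc s (G i).2).
Definition Zpart (S : pred 'I_m) : R :=
  \big[Rplus/0]_(s : {ffun 'I_n -> Om}) gweight S s.
Definition gibbs (S : pred 'I_m) (s : {ffun 'I_n -> Om}) : R :=
  gweight S s / Zpart S.

Definition marg1 (S : pred 'I_m) (x : 'I_n) (w : Om) : R :=
  \big[Rplus/0]_(s : {ffun 'I_n -> Om} | s x == w) gibbs S s.
Definition marg2 (S : pred 'I_m) (x y : 'I_n) (w1 w2 : Om) : R :=
  \big[Rplus/0]_(s : {ffun 'I_n -> Om} | (s x == w1) && (s y == w2)) gibbs S s.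
Definition margT (S : pred 'I_m) (v : {ffun 'I_k -> 'I_n}) (t : {ffun 'I_k -> Om}) : R :=
  \big[Rplus/0]_(s : {ffun 'I_n -> Om} | loc s v == t) gibbs S s.

Definition tv_pair (x y : 'I_n) : R :=
  / 2 * \big[Rplus/0]_(w1 : Om) \big[Rplus/0]_(w2 : Om)
     Rabs (marg2 predT x y w1 w2 - marg1 predT x w1 * marg1 predT y w2).

Definition corr : R :=
  / (INR n ^ 2) * \big[Rplus/0]_(x < n) \big[Rplus/0]_(y < n) tv_pair x y.

(* psi_a(t) prod_{positions j} mu_{(partial a)_j -> a}(t_j) *)
Definition bp_num (a : 'I_m) (t : {ffun 'I_k -> Om}) : R :=
  psi (G a).1 t *
  \big[Rmult/1]_(j < k) marg1 (fun i => i != a) ((G a).2 j) (t j).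

Definition bp_err : R :=
  / INR n * \big[Rplus/0]_(a < m) \big[Rplus/0]_(t : {ffun 'I_k -> Om})
     Rabs (margT predT (G a).2 t -
           bp_num a t / \big[Rplus/0]_(t' : {ffun 'I_k -> Om}) bp_num a t').
End Gibbs.

(* Probability of G given m constraints: labels i.i.d. rho, neighbourhoods
   i.i.d. uniform in {x_1..x_n}^k. *)
Definition gprob (I : finType) (k n m : nat) (rho : I -> R) (G : fgraph I k n m) : R :=
  \big[Rmult/1]_(i < m) (rho (G i).1 / INR n ^ k).

Definition cond_exp (I : finType) (k n m : nat) (rho : I -> R)
  (X : fgraph I k n m -> R) : R :=
  \big[Rplus/0]_(G : fgraph I k n m) (gprob rho G * X G).

Definition poisson (lam : R) (m : nat) : R := exp (- lam) * lam ^ m / INR (m`!).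

(* m-th term of E[X(G_n)] with m ~ Po(dn/k); E[X(G_n)] is the sum of the series *)
Definition pterm (I : finType) (d : R) (k : nat) (rho : I -> R)
  (X : forall n m, fgraph I k n m -> R) (n m : nat) : R :=
  poisson (d * INR n / INR k) m * cond_exp rho (X n m).

(* Main.v *)
Require Import Defs.
From Stdlib Require Import Reals Lra Lia.
From HB Require Import structures.
From mathcomp Require Import all_boot.
Open Scope R_scope.
Set Implicit Arguments. Unset Strict Implicit.

Lemma RplusA : associative Rplus. Proof. by move=> *; rewrite Rplus_assoc. Qed.
Lemma RmultA : associative Rmult. Proof. by move=> *; rewrite Rmult_assoc. Qed.
HB.instance Definition _ := Monoid.isComLaw.Build R 0 Rplus RplusA Rplus_comm Rplus_0_l.
HB.instance Definition _ := Monoid.isComLaw.Build R 1 Rmult RmultA Rmult_comm Rmult_1_l.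
HB.instance Definition _ := Monoid.isMulLaw.Build R 0 Rmult Rmult_0_l Rmult_0_r.
HB.instance Definition _ := Monoid.isAddLaw.Build R Rmult Rplus Rmult_plus_distr_r Rmult_plus_distr_l.


Section Gen.
Variable T : finType.

Lemma sumR_le (P : pred T) (F G : T -> R) :
  (forall i, P i -> F i <= G i) -> \big[Rplus/0]_(i | P i) F i <= \big[Rplus/0]_(i | P i) G i.
Proof. move=> h; apply: (big_ind2 (fun a b => a <= b)) => //; [lra| move=>*; lra]. Qed.

Lemma sumR_ge0 (P : pred T) (F : T -> R) :
  (forall i, P i -> 0 <= F i) -> 0 <= \big[Rplus/0]_(i | P i) F i.
Proof. move=> h; apply: (big_ind (fun a => 0 <= a)) => //; [lra| move=>*; lra]. Qed.

Lemma prodR_01 (P : pred T) (F : T -> R) :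
  (forall i, P i -> 0 <= F i <= 1) -> 0 <= \big[Rmult/1]_(i | P i) F i <= 1.
Proof. move=> h; apply: (big_ind (fun a => 0 <= a <= 1)) => //; [lra| move=>*; nra]. Qed.

Lemma prodR_gt0 (P : pred T) (F : T -> R) :
  (forall i, P i -> 0 < F i) -> 0 < \big[Rmult/1]_(i | P i) F i.
Proof. move=> h; apply: (big_ind (fun a => 0 < a)) => //; [lra| move=>*; nra]. Qed.

Lemma prodR_ge0 (P : pred T) (F : T -> R) :
  (forall i, P i -> 0 <= F i) -> 0 <= \big[Rmult/1]_(i | P i) F i.
Proof. move=> h; apply: (big_ind (fun a => 0 <= a)) => //; [lra| move=>*; nra]. Qed.

Lemma Rabs_sum (P : pred T) (F : T -> R) :
  Rabs (\big[Rplus/0]_(i | P i) F i) <= \big[Rplus/0]_(i | P i) Rabs (F i).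
Proof.
apply: (big_ind2 (fun a b => Rabs a <= b)) => //; first by rewrite Rabs_R0; lra.
  by move=> a b c d h1 h2; apply: Rle_trans (Rabs_triang _ _) _; lra.
by move=> i _; lra.
Qed.

Lemma sum_const_R (P : pred T) (c : R) :
  \big[Rplus/0]_(i | P i) c = INR #|P| * c.
Proof.
rewrite big_const; elim: #|P| => [|k IH]; first by rewrite /=; lra.
rewrite [iter _ _ _]/= IH S_INR; lra.
Qed.

Lemma sumR_term (P : pred T) (F : T -> R) j :
  (forall i, P i -> 0 <= F i) -> P j -> F j <= \big[Rplus/0]_(i | P i) F i.
Proof.
move=> h Pj; rewrite (bigD1 j Pj) /=.
have : 0 <= \big[Rplus/0]_(i | P i && (i != j)) F i.
  by apply: sumR_ge0 => i /andP[/h].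
lra.
Qed.

Lemma sumR_sub (P Q : pred T) (F : T -> R) :
  (forall i, 0 <= F i) -> (forall i, P i -> Q i) ->
  \big[Rplus/0]_(i | P i) F i <= \big[Rplus/0]_(i | Q i) F i.
Proof.
move=> h PQ; rewrite [X in _ <= X](bigID P) /=.
have -> : \big[Rplus/0]_(i | Q i && P i) F i = \big[Rplus/0]_(i | P i) F i.
  by apply: eq_bigl => i; case: (boolP (P i)) => Pi; rewrite ?andbT ?andbF ?PQ.
have : 0 <= \big[Rplus/0]_(i | Q i && ~~ P i) F i by apply: sumR_ge0.
lra.
Qed.

End Gen.

Lemma lin_bound (a c : R) : 0 < c -> Rabs a <= a * a / (2 * c) + c / 2.
Proof.
move=> hc.
have h : 2 * c * Rabs a <= a * a + c * c.
  have : 0 <= (Rabs a - c) * (Rabs a - c) by apply: Rle_0_sqr.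
  have : Rabs a * Rabs a = a * a by rewrite /Rabs; case: Rcase_abs => _; ring.
  nra.
have -> : a * a / (2 * c) + c / 2 = (a * a + c * c) / (2 * c) by field; lra.
apply Rmult_le_reg_l with (2 * c); first lra.
have -> : 2 * c * ((a * a + c * c) / (2 * c)) = a * a + c * c by field; lra.
lra.
Qed.

Definition indR (b : bool) : R := if b then 1 else 0.

Lemma sum_ind (S : finType) (P : pred S) (F : S -> R) :
  \big[Rplus/0]_s (F s * indR (P s)) = \big[Rplus/0]_(s | P s) F s.
Proof. rewrite [RHS]big_mkcond; apply: eq_bigr => s _; rewrite /indR; case: (P s); ring. Qed.

Lemma sq_expand (X S : finType) (u : S -> R) (h : X -> S -> R) :
  \big[Rplus/0]_x ((\big[Rplus/0]_s (u s * h x s)) * (\big[Rplus/0]_t (u t * h x t))) =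
  \big[Rplus/0]_s \big[Rplus/0]_t (u s * u t * \big[Rplus/0]_x (h x s * h x t)).
Proof.
transitivity (\big[Rplus/0]_x \big[Rplus/0]_s \big[Rplus/0]_t (u s * h x s * (u t * h x t))).
  apply: eq_bigr => x _; rewrite big_distrl; apply: eq_bigr => s _; by rewrite big_distrr.
rewrite exchange_big; apply: eq_bigr => s _; rewrite exchange_big; apply: eq_bigr => t _.
rewrite big_distrr; apply: eq_bigr => x _ /=; ring.
Qed.

Section Meas.
Variables (Om : finType) (n : nat) (mu : {ffun 'I_n -> Om} -> R).
Hypothesis mu0 : forall s, 0 <= mu s.
Hypothesis mu1 : \big[Rplus/0]_s mu s = 1.

Definition m1 (x : 'I_n) (w : Om) := \big[Rplus/0]_(s : {ffun 'I_n -> Om} | s x == w) mu s.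
Definition m2 (x y : 'I_n) (w1 w2 : Om) :=
  \big[Rplus/0]_(s : {ffun 'I_n -> Om} | (s x == w1) && (s y == w2)) mu s.
Definition gg (x : 'I_n) (w : Om) (s : {ffun 'I_n -> Om}) := indR (s x == w) - m1 x w.
Definition cov x y w := m2 x y w w - m1 x w * m1 y w.

Lemma sub_le1 (P : pred {ffun 'I_n -> Om}) : 0 <= \big[Rplus/0]_(s | P s) mu s <= 1.
Proof.
split; first by apply: sumR_ge0.
by rewrite -mu1; apply: sumR_sub => //.
Qed.

Lemma m1_01 x w : 0 <= m1 x w <= 1. Proof. exact: sub_le1. Qed.
Lemma m2_01 x y w1 w2 : 0 <= m2 x y w1 w2 <= 1. Proof. exact: sub_le1. Qed.

Lemma cov_eq x y w :
  \big[Rplus/0]_s (mu s * (gg x w s * gg y w s)) = cov x y w.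
Proof.
rewrite /gg /cov.
rewrite (eq_bigr (fun s => mu s * indR ((s x == w) && (s y == w)) + (- m1 y w) * (mu s * indR (s x == w))
   + (- m1 x w) * (mu s * indR (s y == w)) + (m1 x w * m1 y w) * mu s)); last first.
  move=> s _; have -> : indR ((s x == w) && (s y == w)) = indR (s x == w) * indR (s y == w).
    by rewrite /indR; case: (s x == w); case: (s y == w) => /=; ring.
  ring.
rewrite !big_split /= -!big_distrr /= !sum_ind mu1.
rewrite -/(m1 x w) -/(m1 y w) -/(m2 x y w w).
ring.
Qed.

Definition GG w (s t : {ffun 'I_n -> Om}) := \big[Rplus/0]_x (gg x w s * gg x w t).

Lemma GG2 w : \big[Rplus/0]_s \big[Rplus/0]_t (mu s * mu t * (GG w s t * GG w s t)) =
  \big[Rplus/0]_x \big[Rplus/0]_y (cov x y w * cov x y w).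
Proof.
rewrite [RHS]pair_bigA /=.
transitivity (\big[Rplus/0]_(p : 'I_n * 'I_n) ((\big[Rplus/0]_s (mu s * (gg p.1 w s * gg p.2 w s)))
   * (\big[Rplus/0]_t (mu t * (gg p.1 w t * gg p.2 w t))))); last first.
  by apply: eq_bigr => p _; rewrite cov_eq.
rewrite (sq_expand mu (fun p s => gg p.1 w s * gg p.2 w s)).
apply: eq_bigr => s _; apply: eq_bigr => t _; congr (_ * _).
rewrite -(pair_bigA _ (fun x y => gg x w s * gg y w s * (gg x w t * gg y w t))) /=.
rewrite /GG big_distrl /=; apply: eq_bigr => x _.
rewrite big_distrr /=; apply: eq_bigr => y _; ring.
Qed.

Lemma claimA (f : {ffun 'I_n -> Om} -> R) w c :
  (forall s, Rabs (f s) <= 1) -> 0 < c -> 0 < INR n ->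
  \big[Rplus/0]_x ((\big[Rplus/0]_s (mu s * f s * gg x w s)) *
                   (\big[Rplus/0]_t (mu t * f t * gg x w t))) <=
  (\big[Rplus/0]_x \big[Rplus/0]_y (cov x y w * cov x y w)) / (2 * c * INR n) + c * INR n / 2.
Proof.
move=> hf hc hn.
rewrite (sq_expand (fun s => mu s * f s) (fun x s => gg x w s)) -GG2.
set K := 2 * c * INR n.
have hK : 0 < K by rewrite /K; nra.
apply: Rle_trans (_ : \big[Rplus/0]_s \big[Rplus/0]_t
   (mu s * mu t * (GG w s t * GG w s t / K + c * INR n / 2)) <= _).
  apply: sumR_le => s _; apply: sumR_le => t _.
  have h1 := lin_bound (GG w s t) (c := c * INR n) ltac:(nra).
  have e1 : 2 * (c * INR n) = K by rewrite /K; ring.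
  rewrite e1 in h1.
  have m0 : 0 <= mu s * mu t by have := mu0 s; have := mu0 t; nra.
  have hfs := hf s; have hft := hf t.
  have h2 : mu s * f s * (mu t * f t) * GG w s t <= mu s * mu t * Rabs (GG w s t).
    apply: Rle_trans (Rle_abs _) _.
    rewrite !Rabs_mult (Rabs_right (mu s)) ?(Rabs_right (mu t)); try (apply: Rle_ge; exact: mu0).
    have := Rabs_pos (f s); have := Rabs_pos (f t); have := Rabs_pos (GG w s t).
    move=> hG0 ht0 hs0.
    have ha : Rabs (f s) * Rabs (f t) <= 1 by nra.
    have hM : 0 <= mu s * mu t * Rabs (GG w s t) by nra.
    have -> : mu s * Rabs (f s) * (mu t * Rabs (f t)) * Rabs (GG w s t) =
      (Rabs (f s) * Rabs (f t)) * (mu s * mu t * Rabs (GG w s t)) by ring.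
    nra.
  have h3 := Rmult_le_compat_l _ _ _ m0 h1.
  rewrite -/(GG w s t); lra.
rewrite (eq_bigr (fun s => / K * \big[Rplus/0]_t (mu s * mu t * (GG w s t * GG w s t))
     + (c * INR n / 2) * mu s)); last first.
  move=> s _; rewrite big_distrr /= -[X in _ = _ + X](Rmult_1_r) -mu1 !big_distrr -big_split /=.
  apply: eq_bigr => t _; rewrite /Rdiv; ring.
rewrite big_split /= -!big_distrr /= mu1; rewrite /Rdiv; lra.
Qed.

Lemma claimB (f : {ffun 'I_n -> Om} -> R) w d :
  (forall s, Rabs (f s) <= 1) -> 0 < d -> 0 < INR n ->
  \big[Rplus/0]_x Rabs (\big[Rplus/0]_s (mu s * f s * gg x w s)) <=
  INR n * (d + (\big[Rplus/0]_x \big[Rplus/0]_y (cov x y w * cov x y w)) / (INR n * INR n)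
     / (4 * (d * d * d))).
Proof.
move=> hf hd hn.
have hA := claimA w (c := d * d) hf ltac:(nra) hn.
set S := \big[Rplus/0]_x _ in hA.
set B := \big[Rplus/0]_x \big[Rplus/0]_y _ in hA *.
apply: Rle_trans (_ : \big[Rplus/0]_x ((\big[Rplus/0]_s (mu s * f s * gg x w s)) *
   (\big[Rplus/0]_s (mu s * f s * gg x w s)) / (2 * d) + d / 2) <= _).
  by apply: sumR_le => x _; apply: lin_bound.
rewrite big_split /= sum_const_R card_ord.
rewrite (eq_bigr (fun x => / (2 * d) * ((\big[Rplus/0]_s (mu s * f s * gg x w s)) *
   (\big[Rplus/0]_s (mu s * f s * gg x w s))))); last by move=> x _; rewrite /Rdiv Rmult_comm.
rewrite -big_distrr /= -/S.
have hB : 0 <= B by apply: sumR_ge0 => x _; apply: sumR_ge0 => y _; nra.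
have e1 : / (2 * d) * (B / (2 * (d * d) * INR n) + d * d * INR n / 2) =
  INR n * (B / (INR n * INR n) / (4 * (d * d * d))) + INR n * (d / 4).
  field; split; lra.
have h2 : / (2 * d) * S <= / (2 * d) * (B / (2 * (d * d) * INR n) + d * d * INR n / 2).
  apply: Rmult_le_compat_l => //; apply: Rlt_le; apply: Rinv_0_lt_compat; lra.
rewrite e1 in h2.
nra.
Qed.

Definition tvp x y := / 2 * \big[Rplus/0]_w1 \big[Rplus/0]_w2
  Rabs (m2 x y w1 w2 - m1 x w1 * m1 y w2).

Lemma cov2_le x y w : cov x y w * cov x y w <= 2 * tvp x y.
Proof.
have h1 : Rabs (cov x y w) <= 1.
  rewrite /cov; have := m2_01 x y w w; have := m1_01 x w; have := m1_01 y w.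
  move=> *; apply: Rabs_le; nra.
have h2 : cov x y w * cov x y w <= Rabs (cov x y w).
  have : cov x y w * cov x y w = Rabs (cov x y w) * Rabs (cov x y w).
    by rewrite /Rabs; case: Rcase_abs => _; ring.
  have := Rabs_pos (cov x y w); nra.
apply: Rle_trans h2 _.
rewrite /tvp.
have -> : 2 * (/ 2 * \big[Rplus/0]_w1 \big[Rplus/0]_w2 Rabs (m2 x y w1 w2 - m1 x w1 * m1 y w2))
  = \big[Rplus/0]_w1 \big[Rplus/0]_w2 Rabs (m2 x y w1 w2 - m1 x w1 * m1 y w2) by field.
apply: Rle_trans (_ : \big[Rplus/0]_w2 Rabs (m2 x y w w2 - m1 x w * m1 y w2) <= _).
  exact: (sumR_term (F := fun w2 => Rabs (m2 x y w w2 - m1 x w * m1 y w2))) (fun _ _ => Rabs_pos _) erefl.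
exact: (sumR_term (F := fun w1 => \big[Rplus/0]_w2 Rabs (m2 x y w1 w2 - m1 x w1 * m1 y w2)))
   (fun _ _ => sumR_ge0 (fun _ _ => Rabs_pos _)) erefl.
Qed.

End Meas.

Section Fiber.
Variables (k n : nat) (j : 'I_k).
Definition upd (v : {ffun 'I_k -> 'I_n}) (y : 'I_n) : {ffun 'I_k -> 'I_n} :=
  [ffun i => if i == j then y else v i].

Lemma upd_at v y : upd v y j = y. Proof. by rewrite ffunE eqxx. Qed.
Lemma upd_upd v a b : upd (upd v a) b = upd v b.
Proof. by apply/ffunP => i; rewrite !ffunE; case: (i == j). Qed.
Lemma upd_id v : upd v (v j) = v.
Proof. by apply/ffunP => i; rewrite !ffunE; case: eqP => // ->. Qed.

Lemma fiber_sum (H : {ffun 'I_k -> 'I_n} -> R) y z :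
  \big[Rplus/0]_(v : {ffun 'I_k -> 'I_n} | v j == z) H (upd v y) = \big[Rplus/0]_(w : {ffun 'I_k -> 'I_n} | w j == y) H w.
Proof.
rewrite (reindex_onto (fun w => upd w z) (fun v => upd v y)); last first.
  by move=> v /eqP hv; rewrite upd_upd -hv upd_id.
apply: eq_big => w.
  rewrite upd_at eqxx /= upd_upd.
  apply/eqP/eqP => [<-|<-]; [by rewrite upd_at | by rewrite upd_id].
by move=> /andP[_ /eqP hw]; exact: (congr1 H hw).
Qed.

Lemma fiber_avg (F : {ffun 'I_k -> 'I_n} -> 'I_n -> R) (beta : R) :
  0 < INR n ->
  (forall v y x, F (upd v y) x = F v x) ->
  (forall v, \big[Rplus/0]_x F v x <= INR n * beta) ->
  \big[Rplus/0]_v F v (v j) <= INR n ^ k * beta.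
Proof.
move=> hn hinv hb.
set H := fun w : {ffun 'I_k -> 'I_n} => F w (w j).
have ha : forall y, \big[Rplus/0]_v H (upd v y) = INR n * \big[Rplus/0]_(w : {ffun 'I_k -> 'I_n} | w j == y) H w.
  move=> y; rewrite (partition_big (fun v : {ffun 'I_k -> 'I_n} => v j) predT) //=.
  rewrite (eq_bigr (fun z => \big[Rplus/0]_(w : {ffun 'I_k -> 'I_n} | w j == y) H w)); last first.
    by move=> z _; rewrite -(fiber_sum H y z).
  by rewrite sum_const_R card_ord.
have hb2 : \big[Rplus/0]_y \big[Rplus/0]_v H (upd v y) = INR n * \big[Rplus/0]_w H w.
  rewrite (eq_bigr _ (fun y _ => ha y)) -big_distrr /=; congr (_ * _).
  by rewrite [RHS](partition_big (fun v : {ffun 'I_k -> 'I_n} => v j) predT).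
have hc : \big[Rplus/0]_y \big[Rplus/0]_v H (upd v y) <= INR n ^ k * (INR n * beta).
  rewrite exchange_big /=.
  rewrite (eq_bigr (fun v => \big[Rplus/0]_y F v y)); last first.
    by move=> v _; apply: eq_bigr => y _; rewrite /H upd_at hinv.
  apply: Rle_trans (sumR_le (fun v _ => hb v)) _.
  rewrite sum_const_R card_ffun !card_ord -pow_INR; right; congr (INR _ * _); elim: (k) => //= m IH; by rewrite expnS IH.
rewrite hb2 in hc.
apply: (Rmult_le_reg_l (INR n)) => //.
have -> : INR n * (INR n ^ k * beta) = INR n ^ k * (INR n * beta) by ring.
exact: hc.
Qed.
End Fiber.

Lemma tele (T : nat -> R) N : \big[Rplus/0]_(j < N) (T j.+1 - T j) = T N - T 0%N.
Proof. elim: N => [|N IH]; first by rewrite big_ord0; ring. by rewrite big_ord_recr /= IH; ring. Qed.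

Section Tup.
Variables (Om : finType) (n k : nat) (mu : {ffun 'I_n -> Om} -> R).
Hypothesis mu0 : forall s, 0 <= mu s.
Hypothesis mu1 : \big[Rplus/0]_s mu s = 1.

Definition nuT (v : {ffun 'I_k -> 'I_n}) (t : {ffun 'I_k -> Om}) :=
  \big[Rplus/0]_(s : {ffun 'I_n -> Om} | loc s v == t) mu s.
Definition piT (v : {ffun 'I_k -> 'I_n}) (t : {ffun 'I_k -> Om}) :=
  \big[Rmult/1]_(i < k) m1 mu (v i) (t i).
Definition Pj (v : {ffun 'I_k -> 'I_n}) (t : {ffun 'I_k -> Om}) (j : nat) (s : {ffun 'I_n -> Om}) :=
  \big[Rmult/1]_(i < k | (i < j)%N) indR (s (v i) == t i).
Definition Qj (v : {ffun 'I_k -> 'I_n}) (t : {ffun 'I_k -> Om}) (j : nat) :=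
  \big[Rmult/1]_(i < k | (j <= i)%N) m1 mu (v i) (t i).
Definition Tj v t j := (\big[Rplus/0]_s (mu s * Pj v t j s)) * Qj v t j.

Lemma Pj01 v t j s : 0 <= Pj v t j s <= 1.
Proof. by apply: prodR_01 => i _; rewrite /indR; case: (_ == _); lra. Qed.
Lemma Qj01 v t j : 0 <= Qj v t j <= 1.
Proof. by apply: prodR_01 => i _; apply: m1_01. Qed.

Lemma T0 v t : Tj v t 0 = piT v t.
Proof.
rewrite /Tj /Pj /Qj /piT.
rewrite (eq_bigr (fun s => mu s)); last by move=> s _; rewrite big_pred0 //; ring.
by rewrite mu1 Rmult_1_l; apply: eq_bigl.
Qed.

Lemma ind_loc (v : {ffun 'I_k -> 'I_n}) (t : {ffun 'I_k -> Om}) (s : {ffun 'I_n -> Om}) : indR (loc s v == t) = \big[Rmult/1]_(i < k) indR (s (v i) == t i).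
Proof.
case: eqP => [<-|ne].
  by rewrite /indR big1 // => i _; rewrite ffunE eqxx.
have [i hi] : exists i, s (v i) != t i.
  case: (pickP (fun i => s (v i) != t i)) => [i hi|h]; first by exists i.
  exfalso; apply: ne; apply/ffunP => i; rewrite ffunE.
  by move: (h i) => /negbFE/eqP.
by rewrite (bigD1 i) //= /indR (negbTE hi) Rmult_0_l.
Qed.

Lemma Tk v t : Tj v t k = nuT v t.
Proof.
rewrite /Tj /Qj [X in _ * X]big_pred0; last by move=> i; rewrite leqNgt ltn_ord.
rewrite Rmult_1_r /nuT -(sum_ind (fun s => loc s v == t) mu); apply: eq_bigr => s _; rewrite ind_loc /Pj.
by congr (_ * _); apply: eq_bigl => i; rewrite ltn_ord.
Qed.

Lemma Tstep v t (j : 'I_k) :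
  Tj v t j.+1 - Tj v t j =
  Qj v t j.+1 * \big[Rplus/0]_s (mu s * Pj v t j s * gg mu (v j) (t j) s).
Proof.
have hP : forall s, Pj v t j.+1 s = indR (s (v j) == t j) * Pj v t j s.
  move=> s; rewrite /Pj (bigD1 j) ?ltnSn //=; congr (_ * _); apply: eq_bigl => i.
  by rewrite ltnS ltn_neqAle andbC.
have hQ : Qj v t j = m1 mu (v j) (t j) * Qj v t j.+1.
  rewrite /Qj (bigD1 j) ?leqnn //=; congr (_ * _); apply: eq_bigl => i.
  by rewrite ltn_neqAle eq_sym andbC.
rewrite /Tj hQ (eq_bigr _ (fun s _ => congr1 (fun x => mu s * x) (hP s))).
rewrite /gg.
rewrite [X in _ = _ * X](eq_bigr (fun s => mu s * (indR (s (v j) == t j) * Pj v t j s) + (- m1 mu (v j) (t j)) * (mu s * Pj v t j s))); last first.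
  by move=> s _; ring.
rewrite big_split /= -big_distrr /=; ring.
Qed.

Lemma nu_pi v t :
  Rabs (nuT v t - piT v t) <=
  \big[Rplus/0]_(j < k) Rabs (\big[Rplus/0]_s (mu s * Pj v t j s * gg mu (v j) (t j) s)).
Proof.
rewrite -Tk -T0 -(tele (Tj v t)).
apply: Rle_trans (Rabs_sum _ _) _.
apply: sumR_le => j _; rewrite Tstep Rabs_mult.
have := Qj01 v t j.+1; have := Rabs_pos (\big[Rplus/0]_s (mu s * Pj v t j s * gg mu (v j) (t j) s)).
rewrite (Rabs_right (Qj _ _ _)); last by apply: Rle_ge; case: (Qj01 v t j.+1).
nra.
Qed.

Lemma tuple_avg d : 0 < d -> 0 < INR n ->
  \big[Rplus/0]_(v : {ffun 'I_k -> 'I_n}) \big[Rplus/0]_(t : {ffun 'I_k -> Om}) Rabs (nuT v t - piT v t) <=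
  INR k * INR #|{ffun 'I_k -> Om}| *
  (INR n ^ k * (d + 2 * (/ (INR n ^ 2) * \big[Rplus/0]_x \big[Rplus/0]_y tvp mu x y) / (4 * (d * d * d)))).
Proof.
move=> hd hn.
set beta := d + _.
apply: Rle_trans (_ : \big[Rplus/0]_(v : {ffun 'I_k -> 'I_n}) \big[Rplus/0]_(t : {ffun 'I_k -> Om})
   \big[Rplus/0]_(j < k) Rabs (\big[Rplus/0]_s (mu s * Pj v t j s * gg mu (v j) (t j) s)) <= _).
  by apply: sumR_le => v _; apply: sumR_le => t _; apply: nu_pi.
rewrite exchange_big /=.
rewrite (eq_bigr (fun t => \big[Rplus/0]_(j < k) \big[Rplus/0]_(v : {ffun 'I_k -> 'I_n})
   Rabs (\big[Rplus/0]_s (mu s * Pj v t j s * gg mu (v j) (t j) s)))); last first.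
  by move=> t _; rewrite exchange_big.
rewrite exchange_big /=.
apply: Rle_trans (_ : \big[Rplus/0]_(j < k) \big[Rplus/0]_(t : {ffun 'I_k -> Om}) (INR n ^ k * beta) <= _).
  apply: sumR_le => j _; apply: sumR_le => t _.
  apply: (fiber_avg (j := j) (F := fun v x => Rabs (\big[Rplus/0]_s (mu s * Pj v t j s * gg mu x (t j) s)))) => //.
    move=> v y x; congr Rabs; apply: eq_bigr => s _; congr (_ * _ * _).
    apply: eq_bigr => i hi; rewrite ffunE.
    have -> : (i == j) = false.
      by apply/negbTE; apply/eqP => eij; move: hi; rewrite eij ltnn.
    by [].
  move=> v.
  have hf : forall s, Rabs (Pj v t j s) <= 1.
    by move=> s; case: (Pj01 v t j s) => h0 h1; rewrite Rabs_right; lra.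
  apply: Rle_trans (claimB mu0 mu1 (t j) hf hd hn) _.
  apply: Rmult_le_compat_l; first lra.
  rewrite /beta.
  set S := \big[Rplus/0]_x \big[Rplus/0]_y tvp mu x y.
  have hB : \big[Rplus/0]_x \big[Rplus/0]_y (cov mu x y (t j) * cov mu x y (t j)) <= 2 * S.
    rewrite /S big_distrr /=; apply: sumR_le => x _; rewrite big_distrr /=.
    by apply: sumR_le => y _; apply: cov2_le.
  have e : INR n ^ 2 = INR n * INR n by ring.
  rewrite e.
  have hd3 : 0 < 4 * (d * d * d) by apply: Rmult_lt_0_compat; [lra| apply: Rmult_lt_0_compat; [nra|lra]].
  have hnn : 0 < INR n * INR n by nra.
  apply: Rplus_le_compat_l.
  rewrite /Rdiv; apply: Rmult_le_compat_r; first by apply: Rlt_le; apply: Rinv_0_lt_compat.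
  have -> : 2 * (/ (INR n * INR n) * S) = 2 * S * / (INR n * INR n) by ring.
  apply: Rmult_le_compat_r => //; apply: Rlt_le; apply: Rinv_0_lt_compat => //.
rewrite (eq_bigr (fun j => INR #|{ffun 'I_k -> Om}| * (INR n ^ k * beta))); last first.
  by move=> j _; rewrite sum_const_R.
rewrite sum_const_R card_ord; right; ring.
Qed.

Lemma sum_m1 x : \big[Rplus/0]_w m1 mu x w = 1.
Proof.
rewrite -mu1 [RHS](partition_big (fun s : {ffun 'I_n -> Om} => s x) predT) //=.
Qed.

Lemma sum_nuT v : \big[Rplus/0]_t nuT v t = 1.
Proof.
rewrite -mu1 [RHS](partition_big (fun s : {ffun 'I_n -> Om} => loc s v) predT) //=.
Qed.

Lemma sum_piT v : \big[Rplus/0]_t piT v t = 1.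
Proof.
rewrite /piT -(bigA_distr_bigA (fun (i : 'I_k) (w : Om) => m1 mu (v i) w)) /=.
by rewrite big1 // => i _; rewrite sum_m1.
Qed.

Lemma nuT_ge0 v t : 0 <= nuT v t. Proof. by apply: sumR_ge0. Qed.
Lemma piT_ge0 v t : 0 <= piT v t. Proof. by apply: prodR_ge0 => i _; case: (m1_01 mu0 mu1 (v i) (t i)). Qed.
End Tup.

Lemma bp_generic (T : finType) (ps nu pi : T -> R) pmin pmax :
  0 < pmin -> pmin <= pmax -> (forall t, pmin <= ps t <= pmax) ->
  (forall t, 0 <= nu t) -> (forall t, 0 <= pi t) ->
  \big[Rplus/0]_t nu t = 1 -> \big[Rplus/0]_t pi t = 1 ->
  \big[Rplus/0]_t Rabs (ps t * nu t / \big[Rplus/0]_u (ps u * nu u)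
                        - ps t * pi t / \big[Rplus/0]_u (ps u * pi u)) <=
  2 * (pmax / pmin) * \big[Rplus/0]_t Rabs (nu t - pi t).
Proof.
move=> hp hpm hps hnu hpi snu spi.
set A := \big[Rplus/0]_u (ps u * nu u).
set B := \big[Rplus/0]_u (ps u * pi u).
set D := \big[Rplus/0]_t Rabs (nu t - pi t).
have hA : pmin <= A.
  rewrite -[pmin]Rmult_1_r -snu big_distrr /=; apply: sumR_le => t _.
  have := hps t; have := hnu t; nra.
have hB : pmin <= B.
  rewrite -[pmin]Rmult_1_r -spi big_distrr /=; apply: sumR_le => t _.
  have := hps t; have := hpi t; nra.
have hBA : Rabs (B - A) <= pmax * D.
  have -> : B - A = \big[Rplus/0]_t (ps t * (pi t - nu t)).
    rewrite /A /B.
    have -> : \big[Rplus/0]_t (ps t * (pi t - nu t)) =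
       \big[Rplus/0]_t (ps t * pi t + (-1) * (ps t * nu t)).
      by apply: eq_bigr => t _; ring.
    rewrite big_split /= -big_distrr /=; ring.
  apply: Rle_trans (Rabs_sum _ _) _.
  rewrite /D big_distrr /=; apply: sumR_le => t _.
  rewrite Rabs_mult Rabs_right; last by case: (hps t) => *; lra.
  rewrite Rabs_minus_sym; have := hps t; have := Rabs_pos (nu t - pi t); nra.
have hD : 0 <= D by apply: sumR_ge0 => t _; apply: Rabs_pos.
apply: Rle_trans (_ : \big[Rplus/0]_t (pmax / pmin * Rabs (nu t - pi t) + ps t * pi t * (Rabs (B - A) / (A * B))) <= _).
  apply: sumR_le => t _.
  have -> : ps t * nu t / A - ps t * pi t / B = ps t * (nu t - pi t) / A + ps t * pi t * ((B - A) / (A * B)).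
    field; lra.
  apply: Rle_trans (Rabs_triang _ _) _.
  apply: Rplus_le_compat.
    rewrite /Rdiv !Rabs_mult (Rabs_right (ps t)); last by case: (hps t) => *; lra.
    rewrite (Rabs_right (/ A)); last by apply: Rle_ge; apply: Rlt_le; apply: Rinv_0_lt_compat; lra.
    have h1 : / A <= / pmin by apply: Rinv_le_contravar.
    have hiA := Rinv_0_lt_compat A ltac:(lra).
    have h2 : ps t * / A <= pmax / pmin.
      rewrite /Rdiv; apply: Rmult_le_compat; try lra; case: (hps t) => *; lra.
    have -> : ps t * Rabs (nu t - pi t) * / A = (ps t * / A) * Rabs (nu t - pi t) by ring.
    by apply: Rmult_le_compat_r => //; apply: Rabs_pos.
  have hpt : 0 <= ps t * pi t by have := hpi t; case: (hps t) => *; nra.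
  have hAB : 0 < / (A * B) by apply: Rinv_0_lt_compat; nra.
  rewrite Rabs_mult (Rabs_right (ps t * pi t)); last lra.
  rewrite /Rdiv Rabs_mult (Rabs_right (/ (A * B))); lra.
rewrite big_split /= -big_distrr /=.
rewrite [X in _ + X](eq_bigr (fun t => (Rabs (B - A) / (A * B)) * (ps t * pi t))); last by move=> t _; ring.
rewrite -big_distrr /= -/B -/D.
have -> : Rabs (B - A) / (A * B) * B = Rabs (B - A) / A by field; lra.
have : Rabs (B - A) / A <= pmax * D / pmin.
  apply: Rle_trans (_ : pmax * D / A <= _).
    by rewrite /Rdiv; apply: Rmult_le_compat_r => //; apply: Rlt_le; apply: Rinv_0_lt_compat; lra.
  rewrite /Rdiv; apply: Rmult_le_compat_l; first by nra.
  by apply: Rinv_le_contravar.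
have -> : 2 * (pmax / pmin) * D = pmax / pmin * D + pmax * D / pmin by field; lra.
lra.
Qed.

Section Gib.
Variables (Om I : finType) (k n : nat) (psi : I -> {ffun 'I_k -> Om} -> R).
Hypothesis hpsi : forall t s, 0 < psi t s.
Variable w0 : Om.

Lemma gweight_pos (m : nat) (G : {ffun 'I_m -> (I * {ffun 'I_k -> 'I_n})%type}) S s : 0 < gweight psi G S s.
Proof. by apply: prodR_gt0. Qed.

Lemma Zpart_pos (m : nat) (G : {ffun 'I_m -> (I * {ffun 'I_k -> 'I_n})%type}) S : 0 < Zpart psi G S.
Proof.
apply: Rlt_le_trans (gweight_pos G S [ffun _ => w0]) _.
by apply: (sumR_term (F := gweight psi G S)) => // s _; apply: Rlt_le; apply: gweight_pos.
Qed.

Lemma gibbs_ge0 (m : nat) (G : {ffun 'I_m -> (I * {ffun 'I_k -> 'I_n})%type}) S s : 0 <= gibbs psi G S s.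
Proof.
rewrite /gibbs /Rdiv; apply: Rmult_le_pos; first exact: Rlt_le (gweight_pos _ _ _).
exact: Rlt_le (Rinv_0_lt_compat _ (Zpart_pos _ _)).
Qed.

Lemma gibbs_sum1 (m : nat) (G : {ffun 'I_m -> (I * {ffun 'I_k -> 'I_n})%type}) S : \big[Rplus/0]_s gibbs psi G S s = 1.
Proof.
rewrite /gibbs /Rdiv -big_distrl /= -/(Zpart psi G S).
by apply: Rinv_r; apply: Rgt_not_eq; apply: Zpart_pos.
Qed.

Section Del.
Variables (m : nat) (G : {ffun 'I_m.+1 -> (I * {ffun 'I_k -> 'I_n})%type}) (a : 'I_m.+1).
Definition Gdel : {ffun 'I_m -> (I * {ffun 'I_k -> 'I_n})%type} := [ffun i : 'I_m => G (lift a i)].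
Let v := (G a).2.
Let ps := psi (G a).1.
Let mu' := gibbs psi Gdel predT.

Lemma gw_full s : gweight psi G predT s = ps (loc s v) * gweight psi Gdel predT s.
Proof.
rewrite /gweight (bigD1_ord a) //=; congr (_ * _).
by apply: eq_bigr => i _; rewrite ffunE.
Qed.

Lemma gw_del s : gweight psi G (fun i => i != a) s = gweight psi Gdel predT s.
Proof.
have h := gw_full s.
rewrite /gweight (bigD1 a) //= in h.
have hp : 0 < ps (loc s v) by apply: hpsi.
apply: (Rmult_eq_reg_l (ps (loc s v))); last lra.
rewrite -h /gweight; congr (_ * _).
Qed.

Lemma gibbs_del s : gibbs psi G (fun i => i != a) s = mu' s.
Proof.
rewrite /mu' /gibbs gw_del /Zpart; congr (_ / _).
by apply: eq_bigr => s' _; rewrite gw_del.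
Qed.

Lemma marg1_del x w : marg1 psi G (fun i => i != a) x w = m1 mu' x w.
Proof. by apply: eq_bigr => s _; rewrite gibbs_del. Qed.

Lemma bpnum_eq t : bp_num psi G a t = ps t * piT mu' v t.
Proof. by rewrite /bp_num /piT; congr (_ * _); apply: eq_bigr => i _; rewrite marg1_del. Qed.

Lemma margT_full t :
  margT psi G predT v t = ps t * nuT mu' v t / \big[Rplus/0]_u (ps u * nuT mu' v u).
Proof.
set W := gweight psi Gdel predT.
set Z' := Zpart psi Gdel predT.
have hZ' : 0 < Z' by apply: Zpart_pos.
set N := fun u => \big[Rplus/0]_(s : {ffun 'I_n -> Om} | loc s v == u) W s.
have hnu : forall u, nuT mu' v u = N u / Z'.
  move=> u; rewrite /nuT /N /Rdiv big_distrl /=; apply: eq_bigr => s _; by [].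
have hZ : Zpart psi G predT = \big[Rplus/0]_u (ps u * N u).
  rewrite /Zpart (partition_big (fun s : {ffun 'I_n -> Om} => loc s v) predT) //=.
  apply: eq_bigr => u _; rewrite /N big_distrr /=; apply: eq_bigr => s /eqP hs.
  by rewrite gw_full hs.
have hL : margT psi G predT v t = ps t * N t / Zpart psi G predT.
  rewrite /margT /N /Rdiv big_distrr /= big_distrl /=; apply: eq_bigr => s /eqP hs.
  by rewrite /gibbs gw_full hs /Rdiv /W.
have hSp : 0 < \big[Rplus/0]_u (ps u * N u) by rewrite -hZ; apply: Zpart_pos.
rewrite hL hZ.
rewrite [X in _ = _ / X](eq_bigr (fun u => / Z' * (ps u * N u))); last by move=> u _; rewrite hnu /Rdiv; ring.
rewrite -big_distrr /= hnu; set S := \big[Rplus/0]_u _ in hSp *; field; split; lra.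
Qed.

Lemma h_bound pmin pmax :
  0 < pmin -> pmin <= pmax -> (forall t, pmin <= ps t <= pmax) ->
  \big[Rplus/0]_t Rabs (margT psi G predT v t -
         bp_num psi G a t / \big[Rplus/0]_u bp_num psi G a u) <=
  2 * (pmax / pmin) * \big[Rplus/0]_t Rabs (nuT mu' v t - piT mu' v t).
Proof.
move=> h1 h2 h3.
have mu0 : forall s, 0 <= mu' s by move=> s; apply: gibbs_ge0.
have mu1 : \big[Rplus/0]_s mu' s = 1 by apply: gibbs_sum1.
apply: Rle_trans (bp_generic (nu := nuT mu' v) (pi := piT mu' v) h1 h2 h3 _ _ _ _) => //.
- right; apply: eq_bigr => t _; rewrite margT_full !bpnum_eq; congr (Rabs (_ - _ / _)).
  by apply: eq_bigr => u _; rewrite bpnum_eq.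
- by move=> t; apply: nuT_ge0.
- by move=> t; apply: piT_ge0.
- exact: sum_nuT.
- exact: sum_piT.
Qed.
End Del.
End Gib.

Section Prob.
Variables (Om I : finType) (k n : nat) (psi : I -> {ffun 'I_k -> Om} -> R) (rho : I -> R).
Local Notation C := (I * {ffun 'I_k -> 'I_n})%type.

Definition ins (m : nat) (a : 'I_m.+1) (c : C) (G' : {ffun 'I_m -> C}) : {ffun 'I_m.+1 -> C} :=
  [ffun i => if unlift a i is Some i' then G' i' else c].

Lemma ins_at m (a : 'I_m.+1) c G' : ins a c G' a = c.
Proof. by rewrite ffunE unlift_none. Qed.
Lemma Gdel_ins m (a : 'I_m.+1) c G' : Gdel (ins a c G') a = G'.
Proof. by apply/ffunP => i; rewrite !ffunE liftK. Qed.
Lemma ins_Gdel m (a : 'I_m.+1) (G : {ffun 'I_m.+1 -> C}) : ins a (G a) (Gdel G a) = G.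
Proof.
apply/ffunP => i; rewrite ffunE; case: unliftP => [j ->|->] //.
by rewrite ffunE.
Qed.

Lemma sum_del m (a : 'I_m.+1) (F : {ffun 'I_m.+1 -> C} -> R) :
  \big[Rplus/0]_G F G = \big[Rplus/0]_(c : C) \big[Rplus/0]_(G' : {ffun 'I_m -> C}) F (ins a c G').
Proof.
rewrite pair_bigA /=.
rewrite (reindex (fun p : C * {ffun 'I_m -> C} => ins a p.1 p.2)) //.
exists (fun G : {ffun 'I_m.+1 -> C} => (G a, Gdel G a)).
  by move=> [c G'] _ /=; rewrite ins_at Gdel_ins.
by move=> G _ /=; rewrite ins_Gdel.
Qed.

Lemma gprob_ins m (a : 'I_m.+1) c G' :
  gprob rho (ins a c G') = rho c.1 / INR n ^ k * gprob rho G'.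
Proof.
rewrite /gprob (bigD1_ord a) //= ins_at; congr (_ * _).
by apply: eq_bigr => i _; rewrite ffunE liftK.
Qed.

Hypothesis hn : 0 < INR n.
Hypothesis rho0 : forall t, 0 <= rho t.
Hypothesis rho1 : \big[Rplus/0]_t rho t = 1.

Lemma sum_c (F : {ffun 'I_k -> 'I_n} -> R) :
  \big[Rplus/0]_(c : C) (rho c.1 / INR n ^ k * F c.2) = / INR n ^ k * \big[Rplus/0]_v F v.
Proof.
rewrite -(pair_bigA _ (fun l v => rho l / INR n ^ k * F v)) /=.
rewrite (eq_bigr (fun l => rho l * (/ INR n ^ k * \big[Rplus/0]_v F v))); last first.
  by move=> l _; rewrite !big_distrr /=; apply: eq_bigr => v _; rewrite /Rdiv; ring.
by rewrite -big_distrl /= rho1 Rmult_1_l.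
Qed.

Lemma gprob_ge0 m (G : {ffun 'I_m -> C}) : 0 <= gprob rho G.
Proof.
apply: prodR_ge0 => i _; rewrite /Rdiv; apply: Rmult_le_pos => //.
by apply: Rlt_le; apply: Rinv_0_lt_compat; apply: pow_lt.
Qed.

Lemma gprob_sum1 m : \big[Rplus/0]_(G : {ffun 'I_m -> C}) gprob rho G = 1.
Proof.
elim: m => [|m IH].
  rewrite (eq_bigr (fun _ => 1)); last by move=> G _; rewrite /gprob big_ord0.
  by rewrite sum_const_R card_ffun card_ord /=; ring.
rewrite (sum_del ord0).
rewrite (eq_bigr (fun c => rho c.1 / INR n ^ k * 1)); last first.
  move=> c _; rewrite (eq_bigr (fun G' => rho c.1 / INR n ^ k * gprob rho G')); last first.
    by move=> G' _; rewrite gprob_ins.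
  by rewrite -big_distrr /= IH.
rewrite (sum_c (fun _ => 1)) sum_const_R card_ffun !card_ord.
have -> : INR (n ^ k) = INR n ^ k.
  rewrite -pow_INR; congr INR; by elim: (k) => //= j IHj; rewrite expnS IHj.
field; apply: pow_nonzero; lra.
Qed.

Hypothesis hpsi : forall t s, 0 < psi t s.
Variable w0 : Om.
Variables (pmin pmax : R).
Hypothesis hp : 0 < pmin.
Hypothesis hpm : pmin <= pmax.
Hypothesis hpb : forall l t, pmin <= psi l t <= pmax.

Definition Dv m (G' : {ffun 'I_m -> C}) (v : {ffun 'I_k -> 'I_n}) :=
  \big[Rplus/0]_t Rabs (nuT (gibbs psi G' predT) v t - piT (gibbs psi G' predT) v t).

Lemma avg_D m (G' : {ffun 'I_m -> C}) d : 0 < d ->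
  / INR n ^ k * \big[Rplus/0]_v Dv G' v <=
  INR k * INR #|{ffun 'I_k -> Om}| * (d + corr psi G' / (2 * (d * d * d))).
Proof.
move=> hd.
have mu0 : forall s, 0 <= gibbs psi G' predT s by move=> s; apply: gibbs_ge0.
have mu1 : \big[Rplus/0]_s gibbs psi G' predT s = 1 by apply: gibbs_sum1.
have h := tuple_avg k mu0 mu1 hd hn.
have hnk : 0 < INR n ^ k by apply: pow_lt.
have hinv : 0 < / INR n ^ k by apply: Rinv_0_lt_compat.
apply: Rle_trans (Rmult_le_compat_l _ _ _ (Rlt_le _ _ hinv) h) _.
right.
have -> : 2 * (/ INR n ^ 2 * \big[Rplus/0]_x \big[Rplus/0]_y tvp (gibbs psi G' predT) x y) / (4 * (d * d * d))
  = corr psi G' / (2 * (d * d * d)).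
  have ec : corr psi G' = / INR n ^ 2 * \big[Rplus/0]_x \big[Rplus/0]_y tvp (gibbs psi G' predT) x y by [].
  rewrite ec; field; lra.
field; lra.
Qed.

Lemma step_bound m d : 0 < d ->
  cond_exp rho (fun G : {ffun 'I_m.+1 -> C} => bp_err psi G) <=
  INR m.+1 / INR n * (2 * (pmax / pmin) * (INR k * INR #|{ffun 'I_k -> Om}|)) *
  (d + cond_exp rho (fun G : {ffun 'I_m -> C} => corr psi G) / (2 * (d * d * d))).
Proof.
move=> hd.
set C1 := 2 * (pmax / pmin).
set K := INR k * INR #|{ffun 'I_k -> Om}|.
set Bd := C1 * K * (d + cond_exp rho (fun G : {ffun 'I_m -> C} => corr psi G) / (2 * (d * d * d))).
have hC1 : 0 <= C1 by rewrite /C1 /Rdiv; apply: Rmult_le_pos; [lra|]; apply: Rmult_le_pos; [lra|]; apply: Rlt_le; apply: Rinv_0_lt_compat.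
have hper : forall a : 'I_m.+1,
  \big[Rplus/0]_(G : {ffun 'I_m.+1 -> C}) (gprob rho G * \big[Rplus/0]_t Rabs (margT psi G predT (G a).2 t -
         bp_num psi G a t / \big[Rplus/0]_u bp_num psi G a u)) <= Bd.
  move=> a; rewrite (sum_del a).
  apply: Rle_trans (_ : \big[Rplus/0]_(c : C) \big[Rplus/0]_(G' : {ffun 'I_m -> C})
      (rho c.1 / INR n ^ k * gprob rho G' * (C1 * Dv G' c.2)) <= _).
    apply: sumR_le => c _; apply: sumR_le => G' _.
    rewrite gprob_ins.
    have hw : 0 <= rho c.1 / INR n ^ k * gprob rho G'.
      apply: Rmult_le_pos; last exact: gprob_ge0.
      by rewrite /Rdiv; apply: Rmult_le_pos => //; apply: Rlt_le; apply: Rinv_0_lt_compat; apply: pow_lt.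
    apply: Rmult_le_compat_l => //.
    have hb := @h_bound _ _ _ _ _ hpsi w0 _ (ins a c G') a _ _ hp hpm (fun t => hpb _ t).
    by rewrite ins_at Gdel_ins in hb; rewrite ins_at.
  rewrite exchange_big /=.
  rewrite (eq_bigr (fun G' => gprob rho G' * C1 * (/ INR n ^ k * \big[Rplus/0]_v Dv G' v))); last first.
    move=> G' _; rewrite -sum_c !big_distrr /=; apply: eq_bigr => c _; ring.
  apply: Rle_trans (_ : \big[Rplus/0]_(G' : {ffun 'I_m -> C}) (gprob rho G' * C1 * (K * (d + corr psi G' / (2 * (d * d * d))))) <= _).
    apply: sumR_le => G' _; apply: Rmult_le_compat_l; first by apply: Rmult_le_pos => //; apply: gprob_ge0.
    exact: avg_D.
  right.
  rewrite /Bd /cond_exp.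
  rewrite (eq_bigr (fun G' => C1 * K * d * gprob rho G' + (C1 * K / (2 * (d * d * d))) * (gprob rho G' * corr psi G'))); last first.
    move=> G' _; field; lra.
  rewrite big_split /= -!big_distrr /= gprob_sum1; field; lra.
rewrite /cond_exp.
rewrite (eq_bigr (fun G => / INR n * \big[Rplus/0]_(a < m.+1) (gprob rho G * \big[Rplus/0]_t Rabs (margT psi G predT (G a).2 t -
         bp_num psi G a t / \big[Rplus/0]_u bp_num psi G a u)))); last first.
  by move=> G _; rewrite /bp_err big_distrr /= big_distrr /=; rewrite Rmult_comm; rewrite big_distrl /=; apply: eq_bigr => a _; ring.
rewrite -big_distrr /= exchange_big /=.
apply: Rle_trans (_ : / INR n * \big[Rplus/0]_(a < m.+1) Bd <= _).
  apply: Rmult_le_compat_l; first by apply: Rlt_le; apply: Rinv_0_lt_compat.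
  by apply: sumR_le => a _; apply: hper.
rewrite sum_const_R card_ord /Bd /cond_exp; right.
change (match m with 0%N => 1 | _.+1 => INR m + 1 end) with (INR m.+1).
set S1 := \big[Rplus/0]_G _. rewrite /Rdiv; ring.
Qed.
End Prob.

Lemma fact_eq m : INR (m`!) = INR (Factorial.fact m).
Proof.
elim: m => [//|m IH].
rewrite factS fact_simpl !mult_INR -IH; by [].
Qed.

Lemma poisson_ge0 l m : 0 <= l -> 0 <= poisson l m.
Proof.
move=> hl; rewrite /poisson /Rdiv; apply: Rmult_le_pos.
  apply: Rmult_le_pos; [apply: Rlt_le; apply: exp_pos | apply: pow_le => //].
by apply: Rlt_le; apply: Rinv_0_lt_compat; rewrite fact_eq; apply: INR_fact_lt_0.
Qed.

Lemma poisson_S l m : poisson l m.+1 * INR m.+1 = l * poisson l m.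
Proof.
have hp : l ^ m.+1 = l * l ^ m by [].
rewrite /poisson !fact_eq fact_simpl mult_INR hp.
have h1 := INR_fact_lt_0 m.
have h2 : 0 < INR m.+1 by apply: lt_0_INR; apply/ltP.
field; split; lra.
Qed.

Lemma poisson_cv l : Un_cv (sum_f_R0 (poisson l)) 1.
Proof.
have [ex hex] := exist_exp l.
have e : exp l = ex by rewrite /exp; case: (exist_exp l) => x hx /=; apply: (uniqueness_sum _ _ _ hx hex).
have h : Un_cv (fun N => exp (- l) * sum_f_R0 (fun i => / INR (Factorial.fact i) * l ^ i) N) (exp (- l) * exp l).
  apply: CV_mult; last by rewrite e; exact: hex.
  by move=> eps heps; exists 0%N => N _; rewrite /R_dist Rminus_diag Rabs_R0.
rewrite -exp_plus Rplus_opp_l exp_0 in h.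
move=> eps heps; have [N hN] := h eps heps; exists N => N' hN'.
have -> : sum_f_R0 (poisson l) N' = exp (- l) * sum_f_R0 (fun i => / INR (Factorial.fact i) * l ^ i) N'.
  rewrite scal_sum; apply PartSum.sum_eq; intros i _; rewrite /poisson fact_eq /Rdiv; ring.
exact: hN.
Qed.

Lemma sum_lin (f g : nat -> R) a b N :
  sum_f_R0 (fun m => a * f m + b * g m) N = a * sum_f_R0 f N + b * sum_f_R0 g N.
Proof. elim: N => [|N IH] /=; [ring | rewrite IH; ring]. Qed.

Lemma sum_ge0 (f : nat -> R) N : (forall m, 0 <= f m) -> 0 <= sum_f_R0 f N.
Proof. move=> h; elim: N => [|N IH] /=; [exact: h | have := h N.+1; lra]. Qed.

Lemma partial_le (f : nat -> R) l N : (forall m, 0 <= f m) -> Un_cv (sum_f_R0 f) l -> sum_f_R0 f N <= l.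
Proof.
move=> h hl; apply: growing_ineq => // m; rewrite /= ; have := h m.+1; lra.
Qed.

Lemma lim_le (u : nat -> R) l B : Un_cv u l -> (forall N, u N <= B) -> l <= B.
Proof.
move=> hu hB; apply: Rnot_lt_le => hlt.
have [N hN] := hu (l - B) ltac:(lra).
have := hN N (le_n N); have := hB N; rewrite /Rdist => h1.
rewrite /Rabs; case: Rcase_abs => h3 h2; lra.
Qed.

Lemma lim_ge (u : nat -> R) l B : Un_cv u l -> (forall N, B <= u N) -> B <= l.
Proof.
move=> hu hB; apply: Rnot_lt_le => hlt.
have [N hN] := hu (B - l) ltac:(lra).
have := hN N (le_n N); have := hB N; rewrite /Rdist => h1.
rewrite /Rabs; case: Rcase_abs => h3 h2; lra.
Qed.

Lemma shift_le (f g : nat -> R) N :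
  (forall m, f m.+1 <= g m) -> (forall m, 0 <= g m) ->
  sum_f_R0 f N.+1 <= f 0%N + sum_f_R0 g N.
Proof.
move=> h hg; elim: N => [|N IH] /=; first by have := h 0%N; lra.
have := h N.+1; move: IH => /=; lra.
Qed.

Lemma inv_ge0 x : 0 <= x -> 0 <= / x.
Proof.
move=> hx; case: (Req_dec x 0) => [->|hne]; first by rewrite Rinv_0; lra.
by apply: Rlt_le; apply: Rinv_0_lt_compat; lra.
Qed.

Section Fin.
Variables (Om I : finType) (k : nat) (psi : I -> {ffun 'I_k -> Om} -> R) (rho : I -> R).
Hypothesis hk : (0 < k)%N.
Hypothesis hpsi : forall t s, 0 < psi t s.
Hypothesis rho0 : forall t, 0 <= rho t.
Hypothesis rho1 : \big[Rplus/0]_t rho t = 1.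
Variable w0 : Om.

Lemma gprob_ge0' n m (G : {ffun 'I_m -> (I * {ffun 'I_k -> 'I_n})%type}) : 0 <= gprob rho G.
Proof.
apply: prodR_ge0 => i _; rewrite /Rdiv; apply: Rmult_le_pos => //.
by apply: inv_ge0; apply: pow_le; apply: pos_INR.
Qed.

Lemma gprob_le1 n m : \big[Rplus/0]_(G : {ffun 'I_m -> (I * {ffun 'I_k -> 'I_n})%type}) gprob rho G <= 1.
Proof.
case: n => [|n].
  case: m => [|m].
    rewrite (eq_bigr (fun _ => 1)); last by move=> G _; rewrite /gprob big_ord0.
    by rewrite sum_const_R card_ffun card_ord /=; lra.
  rewrite big1; first lra.
  by move=> G _; case: ((G ord0).2 (Ordinal hk)) => i; rewrite ltn0.
right; apply: gprob_sum1 => //; apply: lt_0_INR; lia.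
Qed.

Definition Mc := INR #|Om| * INR #|Om|.

Lemma corr_bounds n m (G : {ffun 'I_m -> (I * {ffun 'I_k -> 'I_n})%type}) :
  0 <= corr psi G <= Mc.
Proof.
have mu0 := gibbs_ge0 hpsi w0 G predT.
have mu1 := gibbs_sum1 hpsi w0 G predT.
have htv : forall x y, 0 <= tv_pair psi G x y <= Mc.
  move=> x y; rewrite /tv_pair; split.
    apply: Rmult_le_pos; first lra.
    by apply: sumR_ge0 => w1 _; apply: sumR_ge0 => w2 _; apply: Rabs_pos.
  apply: Rle_trans (_ : / 2 * \big[Rplus/0]_(w1 : Om) \big[Rplus/0]_(w2 : Om) 1 <= _).
    apply: Rmult_le_compat_l; first lra.
    apply: sumR_le => w1 _; apply: sumR_le => w2 _.
    have : 0 <= marg2 psi G predT x y w1 w2 <= 1 := m2_01 mu0 mu1 x y w1 w2.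
    have : 0 <= marg1 psi G predT x w1 <= 1 := m1_01 mu0 mu1 x w1.
    have : 0 <= marg1 psi G predT y w2 <= 1 := m1_01 mu0 mu1 y w2.
    move=> [h1 h2] [h3 h4] [h5 h6].
    apply: Rabs_le; split; nra.
  rewrite (eq_bigr (fun _ => INR #|Om| * 1)); last by move=> w1 _; rewrite sum_const_R.
  rewrite sum_const_R /Mc.
  have e : #|(xpredT : pred Om)| = #|Om| by apply: eq_card.
  rewrite e; have := pos_INR #|Om|; nra.
have hS0 : 0 <= \big[Rplus/0]_x \big[Rplus/0]_y tv_pair psi G x y.
  by apply: sumR_ge0 => x _; apply: sumR_ge0 => y _; case: (htv x y).
rewrite /corr; split.
  by apply: Rmult_le_pos => //; apply: inv_ge0; apply: pow_le; apply: pos_INR.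
move: G htv hS0 mu0 mu1; case: n => [|n] G htv hS0 mu0 mu1.
  by rewrite big_ord0 Rmult_0_r /Mc; have := pos_INR #|Om|; nra.
have hn' : 0 < INR n.+1 by apply: lt_0_INR; lia.
have hS : \big[Rplus/0]_x \big[Rplus/0]_y tv_pair psi G x y <= INR n.+1 ^ 2 * Mc.
  apply: Rle_trans (_ : \big[Rplus/0]_(x : 'I_n.+1) \big[Rplus/0]_(y : 'I_n.+1) Mc <= _).
    by apply: sumR_le => x _; apply: sumR_le => y _; case: (htv x y).
  rewrite (eq_bigr (fun _ => INR n.+1 * Mc)); last by move=> x _; rewrite sum_const_R card_ord.
  by rewrite sum_const_R card_ord; right; ring.
have hp : 0 < INR n.+1 ^ 2 by apply: pow_lt.
apply: Rle_trans (Rmult_le_compat_l _ _ _ (Rlt_le _ _ (Rinv_0_lt_compat _ hp)) hS) _.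
right; field; lra.
Qed.

Lemma cexp_corr_bounds n m :
  0 <= cond_exp rho (fun G : {ffun 'I_m -> (I * {ffun 'I_k -> 'I_n})%type} => corr psi G) <= Mc.
Proof.
rewrite /cond_exp; split.
  by apply: sumR_ge0 => G _; apply: Rmult_le_pos; [apply: gprob_ge0' | case: (corr_bounds G)].
apply: Rle_trans (_ : \big[Rplus/0]_(G : {ffun 'I_m -> (I * {ffun 'I_k -> 'I_n})%type}) (gprob rho G * Mc) <= _).
  apply: sumR_le => G _; apply: Rmult_le_compat_l; first exact: gprob_ge0'.
  by case: (corr_bounds G).
rewrite -big_distrl /=.
have hM : 0 <= Mc by rewrite /Mc; have := pos_INR #|Om|; nra.
apply: Rle_trans (Rmult_le_compat_r _ _ _ hM (gprob_le1 n m)) _; lra.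
Qed.

Lemma bp_err_ge0 n m (G : {ffun 'I_m -> (I * {ffun 'I_k -> 'I_n})%type}) : 0 <= bp_err psi G.
Proof.
rewrite /bp_err; apply: Rmult_le_pos; first by apply: inv_ge0; apply: pos_INR.
by apply: sumR_ge0 => a _; apply: sumR_ge0 => t _; apply: Rabs_pos.
Qed.

Lemma cexp_bp_ge0 n m :
  0 <= cond_exp rho (fun G : {ffun 'I_m -> (I * {ffun 'I_k -> 'I_n})%type} => bp_err psi G).
Proof. by apply: sumR_ge0 => G _; apply: Rmult_le_pos; [apply: gprob_ge0' | apply: bp_err_ge0]. Qed.

Lemma cexp_bp_0 n :
  cond_exp rho (fun G : {ffun 'I_0 -> (I * {ffun 'I_k -> 'I_n})%type} => bp_err psi G) = 0.
Proof.
rewrite /cond_exp big1 // => G _; rewrite /bp_err big_ord0; ring.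
Qed.
End Fin.

Lemma cv_scal (f : nat -> R) l c : Un_cv (sum_f_R0 f) l -> Un_cv (sum_f_R0 (fun m => c * f m)) (c * l).
Proof.
move=> h.
have h2 : Un_cv (fun N => c * sum_f_R0 f N) (c * l).
  apply: CV_mult => //; by move=> eps heps; exists 0%N => N _; rewrite /Rdist Rminus_diag Rabs_R0.
move=> eps heps; have [N hN] := h2 eps heps; exists N => N' hN'.
have -> : sum_f_R0 (fun m => c * f m) N' = c * sum_f_R0 f N'.
  by rewrite scal_sum; apply PartSum.sum_eq; intros i _; ring.
exact: hN.
Qed.

Unset Implicit Arguments.
Theorem lemma10 (Om I : finType) (k : nat) (d : R)
  (psi : I -> {ffun 'I_k -> Om} -> R) (rho : I -> R) :
  (3 <= k)%N -> 0 < d ->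
  (forall t s, 0 < psi t s) ->
  (forall t, 0 <= rho t) -> \big[Rplus/0]_(t : I) rho t = 1 ->
  (forall e : nat -> R,
     (forall n, infinite_sum (pterm d rho (fun n m G => corr psi G) n) (e n)) ->
     Un_cv e 0) ->
  forall e : nat -> R,
    (forall n, infinite_sum (pterm d rho (fun n m G => bp_err psi G) n) (e n)) ->
    Un_cv e 0.
Proof.
move=> hk3 hd hpsi hrho0 hrho1 Hcorr e He.
have hk : (0 < k)%N := leq_trans (isT : (0 < 3)%N) hk3.
have hkR : 0 < INR k by apply: lt_0_INR; apply/ltP.
case: (pickP (fun _ : Om => true)) => [w0 _|hOm]; last first.
  have h0 : forall n m, pterm d rho (fun n m G => bp_err psi G) n m = 0.
    move=> n m; rewrite /pterm /cond_exp big1; first by rewrite Rmult_0_r.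
    move=> G _; rewrite /bp_err big1; first by rewrite !Rmult_0_r.
    move=> a _; rewrite big1 // => t _.
    by have := hOm (t (Ordinal hk)).
  have hs : forall n N, sum_f_R0 (pterm d rho (fun n m G => bp_err psi G) n) N = 0.
    move=> n; elim=> [|N IH] /=; first exact: h0.
    by rewrite IH h0; ring.
  have he : forall n, e n = 0.
    move=> n; apply: Rle_antisym.
      by apply: (lim_le (He n)) => N; rewrite hs; lra.
    by apply: (lim_ge (He n)) => N; rewrite hs; lra.
  by move=> eps heps; exists 0%N => n _; rewrite he /Rdist Rminus_diag Rabs_R0.
set pmax := 1 + \big[Rplus/0]_l \big[Rplus/0]_t psi l t.
set pmin := / (1 + \big[Rplus/0]_l \big[Rplus/0]_t / psi l t).
have hS1 : 0 <= \big[Rplus/0]_l \big[Rplus/0]_t / psi l t.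
  apply: sumR_ge0 => l _; apply: sumR_ge0 => t _; apply: Rlt_le; apply: Rinv_0_lt_compat; exact: hpsi.
have hS2 : 0 <= \big[Rplus/0]_l \big[Rplus/0]_t psi l t.
  apply: sumR_ge0 => l _; apply: sumR_ge0 => t _; apply: Rlt_le; exact: hpsi.
have hp : 0 < pmin by apply: Rinv_0_lt_compat; lra.
have hpm : pmin <= pmax.
  apply: Rle_trans (_ : 1 <= _); last by rewrite /pmax; lra.
  rewrite /pmin -Rinv_1; apply: Rinv_le_contravar; lra.
have hpb : forall l t, pmin <= psi l t <= pmax.
  move=> l t; split.
    have h1 : / psi l t <= 1 + \big[Rplus/0]_l \big[Rplus/0]_t / psi l t.
      suff : / psi l t <= \big[Rplus/0]_l \big[Rplus/0]_t / psi l t by lra.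
      apply: Rle_trans (_ : \big[Rplus/0]_t0 / psi l t0 <= _).
        apply: (sumR_term (F := fun t0 => / psi l t0)) => // t0 _.
        by apply: Rlt_le; apply: Rinv_0_lt_compat.
      apply: (sumR_term (F := fun l0 => \big[Rplus/0]_t0 / psi l0 t0)) => // l0 _.
      by apply: sumR_ge0 => t0 _; apply: Rlt_le; apply: Rinv_0_lt_compat.
    have hpp := hpsi l t.
    rewrite /pmin -[X in _ <= X](Rinv_inv (psi l t)).
    by apply: Rinv_le_contravar => //; apply: Rinv_0_lt_compat.
  suff : psi l t <= \big[Rplus/0]_l \big[Rplus/0]_t psi l t by rewrite /pmax; lra.
  apply: Rle_trans (_ : \big[Rplus/0]_t0 psi l t0 <= _).
    by apply: (sumR_term (F := fun t0 => psi l t0)) => // t0 _; apply: Rlt_le.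
  apply: (sumR_term (F := fun l0 => \big[Rplus/0]_t0 psi l0 t0)) => // l0 _.
  by apply: sumR_ge0 => t0 _; apply: Rlt_le.
have hlam : forall n, 0 <= d * INR n / INR k.
  move=> n; rewrite /Rdiv; apply: Rmult_le_pos; last by apply: Rlt_le; apply: Rinv_0_lt_compat.
  by apply: Rmult_le_pos; [lra | apply: pos_INR].
have hpc0 : forall n m, 0 <= pterm d rho (fun n m G => corr psi G) n m.
  move=> n m; rewrite /pterm; apply: Rmult_le_pos; first exact: poisson_ge0.
  by case: (cexp_corr_bounds hk hpsi hrho0 hrho1 w0 n m).
have hcv : forall n, {l | Un_cv (sum_f_R0 (pterm d rho (fun n m G => corr psi G) n)) l}.
  move=> n; apply: (Rseries_CV_comp _ (fun m => Mc Om * poisson (d * INR n / INR k) m)).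
    move=> m; split; first exact: hpc0.
    rewrite /pterm Rmult_comm; apply: Rmult_le_compat_r; first exact: poisson_ge0.
    by case: (cexp_corr_bounds hk hpsi hrho0 hrho1 w0 n m).
  exists (Mc Om * 1); exact: cv_scal (poisson_cv _).
set ecorr := fun n => proj1_sig (hcv n).
have Hec : Un_cv ecorr 0 := Hcorr ecorr (fun n => proj2_sig (hcv n)).
have ec0 : forall n, 0 <= ecorr n.
  move=> n; apply: (lim_ge (proj2_sig (hcv n))) => N; exact: sum_ge0.
set C1 := 2 * (pmax / pmin).
set K := INR k * INR #|{ffun 'I_k -> Om}|.
set A := d / INR k * (C1 * K).
have hA : 0 <= A.
  rewrite /A /C1 /K /Rdiv; apply: Rmult_le_pos.
    by apply: Rmult_le_pos; [lra | apply: Rlt_le; apply: Rinv_0_lt_compat].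
  apply: Rmult_le_pos.
    apply: Rmult_le_pos; first lra.
    apply: Rmult_le_pos; [lra | apply: Rlt_le; apply: Rinv_0_lt_compat => //].
  by apply: Rmult_le_pos; apply: pos_INR.
have key : forall n dl, (0 < n)%N -> 0 < dl -> e n <= A * dl + A / (2 * (dl * dl * dl)) * ecorr n.
  move=> n dl hn0 hdl.
  have hn : 0 < INR n by apply: lt_0_INR; apply/ltP.
  have hd3 : 0 < 2 * (dl * dl * dl) by apply: Rmult_lt_0_compat; [lra | apply: Rmult_lt_0_compat; [nra|lra]].
  have hb0 : 0 <= A * dl + A / (2 * (dl * dl * dl)) * ecorr n.
    apply: Rplus_le_le_0_compat; first nra.
    apply: Rmult_le_pos => //; rewrite /Rdiv; apply: Rmult_le_pos => //.
    by apply: Rlt_le; apply: Rinv_0_lt_compat.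
  apply: (lim_le (He n)) => N.
  set lam := d * INR n / INR k.
  set g := fun m => A * dl * poisson lam m + A / (2 * (dl * dl * dl)) * pterm d rho (fun n m G => corr psi G) n m.
  have hg0 : forall m, 0 <= g m.
    move=> m; rewrite /g; apply: Rplus_le_le_0_compat.
      apply: Rmult_le_pos; [nra | exact: (poisson_ge0 m (hlam n))].
    apply: Rmult_le_pos; last exact: hpc0.
    rewrite /Rdiv; apply: Rmult_le_pos => //; by apply: Rlt_le; apply: Rinv_0_lt_compat.
  have hf0 : pterm d rho (fun n m G => bp_err psi G) n 0 = 0.
    by rewrite /pterm cexp_bp_0 Rmult_0_r.
  case: N => [|N]; first by rewrite /= hf0.
  apply: Rle_trans (shift_le (g := g) N _ hg0) _.
    move=> m; rewrite /pterm.
    have hsb := @step_bound Om I k n psi rho hn hrho0 hrho1 hpsi w0 pmin pmax hp hpm hpb m dl hdl.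
    have hpo := poisson_ge0 m.+1 (hlam n).
    apply: Rle_trans (Rmult_le_compat_l _ _ _ hpo hsb) _.
    right; rewrite /g /pterm -/lam -/C1 -/K /A.
    have e1 := poisson_S lam m.
    have e2 : lam = d * INR n / INR k by [].
    set E := cond_exp rho _.
    have -> : poisson lam m.+1 * (INR m.+1 / INR n * (C1 * K) * (dl + E / (2 * (dl * dl * dl))))
       = (poisson lam m.+1 * INR m.+1) / INR n * (C1 * K) * (dl + E / (2 * (dl * dl * dl))).
      by field; lra.
    rewrite e1 e2; field; lra.
  rewrite hf0 Rplus_0_l /g.
  rewrite (sum_lin (fun m => poisson lam m) (fun m => pterm d rho (fun n m G => corr psi G) n m) (A * dl)).
  have h1 : sum_f_R0 (fun m => poisson lam m) N <= 1.
    by apply: partial_le; [move=> m; exact: (poisson_ge0 m (hlam n)) | exact: poisson_cv].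
  have h2 : sum_f_R0 (fun m => pterm d rho (fun n m G => corr psi G) n m) N <= ecorr n.
    by apply: partial_le; [exact: hpc0 | exact: (proj2_sig (hcv n))].
  have hAd : 0 <= A * dl by nra.
  have hAd3 : 0 <= A / (2 * (dl * dl * dl)).
    rewrite /Rdiv; apply: Rmult_le_pos => //; by apply: Rlt_le; apply: Rinv_0_lt_compat.
  apply: Rplus_le_compat.
    by have := Rmult_le_compat_l _ _ _ hAd h1; lra.
  exact: Rmult_le_compat_l.
have hen0 : forall n, (0 < n)%N -> 0 <= e n.
  move=> n _; apply: (lim_ge (He n)) => N; apply: sum_ge0 => m.
  rewrite /pterm; apply: Rmult_le_pos; first exact: poisson_ge0.
  exact: cexp_bp_ge0.
move=> eps heps.
set dl := eps / (2 * (A + 1)).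
have hdl : 0 < dl by rewrite /dl; apply: Rdiv_lt_0_compat; lra.
have hAdl : A * dl < eps / 2.
  rewrite /dl; apply: (Rmult_lt_reg_l (2 * (A + 1))); first lra.
  have -> : 2 * (A + 1) * (A * (eps / (2 * (A + 1)))) = A * eps by field; lra.
  nra.
have hd3 : 0 < 2 * (dl * dl * dl) by apply: Rmult_lt_0_compat; [lra | apply: Rmult_lt_0_compat; [nra|lra]].
set B := A / (2 * (dl * dl * dl)).
have hB : 0 <= B by rewrite /B /Rdiv; apply: Rmult_le_pos => //; apply: Rlt_le; apply: Rinv_0_lt_compat.
have [N hN] := Hec (eps / (2 * (B + 1))) ltac:(apply: Rdiv_lt_0_compat; lra).
exists (maxn N 1) => n hn.
have hnN : (n >= N)%coq_nat by apply/leP; move/leP: hn; rewrite geq_max => /andP[].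
have hn1 : (0 < n)%N by move/leP: hn; rewrite geq_max => /andP[].
have h1 := hN n hnN; rewrite /Rdist Rminus_0_r Rabs_right in h1; last by apply: Rle_ge.
have h2 := key n dl hn1 hdl.
have h3 := hen0 n hn1.
rewrite /Rdist Rminus_0_r Rabs_right; last by apply: Rle_ge.
have h4 : B * ecorr n < eps / 2.
  have h5 : B * ecorr n <= (B + 1) * ecorr n by have := ec0 n; nra.
  apply: Rle_lt_trans h5 _.
  apply: (Rmult_lt_reg_l (/ (B + 1))); first by apply: Rinv_0_lt_compat; lra.
  have -> : / (B + 1) * ((B + 1) * ecorr n) = ecorr n by field; lra.
  have -> : / (B + 1) * (eps / 2) = eps / (2 * (B + 1)) by field; lra.
  exact: h1.
rewrite -/B in h2; lra.
Qed.
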